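(* Let $(\mathcal V,\mathcal W,\lambda)$ be a FTvN system. Then: (a) A linear map $A:\mathcal V\to\mathcal V$ belongs to $\operatorname{Aut}(\mathcal V,\mathcal W,\lambda)$ if and only if $A$ is invertible and both $A$ and $A^{-1}$ are doubly stochastic. (b) If $\mathcal V$ is finite dimensional, every $D$ in the convex hull of $\operatorname{Aut}(\mathcal V,\mathcal W,\lambda)$ is doubly stochastic.
   Context: A Fan-Theobald-von Neumann (FTvN) system is a triple $(\mathcal V,\mathcal W,\lambda)$ where $\mathcal V,\mathcal W$ are real inner product spaces and $\lambda:\mathcal V\to\mathcal W$ is a map such that: (A1) $\|\lambda(x)\|=\|x\|$ for all $x$; (A2) $\langle x,y\rangle\le\langle\lambda(x),\lambda(y)\rangle$ for all $x,y$; (A3) for every $c\in\mathcal V$ and $q\in\lambda(\mathcal V)$ there exists $x$ with $\lambda(x)=q$ and $\langle c,x\rangle=\langle\lambda(c),\lambda(x)\rangle$. $[u]=\{z:\lambda(z)=\lambda(u)\}$; $x\prec y$ iff $x\in\operatorname{conv}[y]$. A linear map $D$ is doubly stochastic if $Dx\prec x$ for all $x$. $\operatorname{Aut}(\mathcal V,\mathcal W,\lambda)$ is the set of invertible linear maps $A:\mathcal V\to\mathcal V$ with $\lambda(Ax)=\lambda(x)$ for all $x$. *)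

(* Defs.v *)
From HB Require Import structures.
From mathcomp Require Import all_boot all_order all_algebra.
From mathcomp Require Import reals.
Set Implicit Arguments. Unset Strict Implicit. Unset Printing Implicit Defensive.
Import Order.TTheory GRing.Theory Num.Theory.
Local Open Scope ring_scope.

Section FTvN.
Variable R : realType.

Definition is_inner_product (V : lmodType R) (ip : V -> V -> R) : Prop :=
  [/\ (forall x y, ip x y = ip y x),
      (forall (a : R) x y z, ip (a *: x + y) z = a * ip x z + ip y z),
      (forall x, 0 <= ip x x) &
      (forall x, ip x x = 0 -> x = 0)].

Definition ipnorm (V : lmodType R) (ip : V -> V -> R) (x : V) : R :=
  Num.sqrt (ip x x).

Definition FTvN_system (V W : lmodType R) (ipV : V -> V -> R) (ipW : W -> W -> R)
  (lam : V -> W) : Prop :=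
  [/\ is_inner_product ipV, is_inner_product ipW,
      (forall x, ipnorm ipW (lam x) = ipnorm ipV x),
      (forall x y, ipV x y <= ipW (lam x) (lam y)) &
      (forall (c : V) (q : W), (exists u, lam u = q) ->
          exists x, lam x = q /\ ipV c x = ipW (lam c) (lam x))].

Definition conv_hull (V : lmodType R) (S : V -> Prop) (x : V) : Prop :=
  exists (n : nat) (t : 'I_n -> R) (p : 'I_n -> V),
    [/\ (forall i, 0 <= t i), \sum_(i < n) t i = 1,
        (forall i, S (p i)) & x = \sum_(i < n) t i *: p i].

Definition lam_class (V W : lmodType R) (lam : V -> W) (u : V) : V -> Prop :=
  fun z => lam z = lam u.

Definition majorized (V W : lmodType R) (lam : V -> W) (x y : V) : Prop :=
  conv_hull (lam_class lam y) x.

Definition is_linear (V : lmodType R) (D : V -> V) : Prop :=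
  forall (a : R) x y, D (a *: x + y) = a *: D x + D y.

Definition doubly_stochastic (V W : lmodType R) (lam : V -> W) (D : V -> V) : Prop :=
  is_linear D /\ forall x, majorized lam (D x) x.

Definition Aut (V W : lmodType R) (lam : V -> W) (A : V -> V) : Prop :=
  [/\ is_linear A, bijective A & forall x, lam (A x) = lam x].

Definition in_conv_Aut (V W : lmodType R) (lam : V -> W) (D : V -> V) : Prop :=
  exists (n : nat) (t : 'I_n -> R) (A : 'I_n -> V -> V),
    [/\ (forall i, 0 <= t i), \sum_(i < n) t i = 1,
        (forall i, Aut lam (A i)) &
        (forall x, D x = \sum_(i < n) t i *: A i x)].

Definition finite_dim (V : lmodType R) : Prop :=
  exists (n : nat) (e : 'I_n -> V), forall x : V,
    exists c : 'I_n -> R, x = \sum_(i < n) c i *: e i.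

End FTvN.

(* Main.v *)
Require Import Defs.
From HB Require Import structures.
From mathcomp Require Import all_boot all_order all_algebra.
From mathcomp Require Import reals ring lra.
Set Implicit Arguments. Unset Strict Implicit. Unset Printing Implicit Defensive.
Import Order.TTheory GRing.Theory Num.Theory.
Local Open Scope ring_scope.

Section Aux.
Variables (R : realType) (V : lmodType R) (ip : V -> V -> R).
Hypothesis Hip : is_inner_product ip.

Lemma ipDl x y z : ip (x + y) z = ip x z + ip y z.
Proof. case: Hip => _ H _ _. by rewrite -[x]scale1r H mul1r scale1r. Qed.

Lemma ip0l z : ip 0 z = 0.
Proof. have := ipDl 0 0 z. rewrite addr0 => H. lra. Qed.

Lemma ipZl a x z : ip (a *: x) z = a * ip x z.
Proof. case: Hip => _ H _ _. by rewrite -[a *: x]addr0 H ip0l addr0. Qed.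

Lemma ipBl x y z : ip (x - y) z = ip x z - ip y z.
Proof. by rewrite ipDl -scaleN1r ipZl mulN1r. Qed.

Lemma ip_suml n (f : 'I_n -> V) z : ip (\sum_(i < n) f i) z = \sum_(i < n) ip (f i) z.
Proof.
elim/big_rec2: _ => [|i y1 y2 _ <-]; first exact: ip0l.
by rewrite ipDl.
Qed.

Lemma conv_sphere n (t : 'I_n -> R) (z : 'I_n -> V) r :
  (forall i, 0 <= t i) -> \sum_(i < n) t i = 1 -> (forall i, ip (z i) (z i) = r) ->
  ip (\sum_(i < n) t i *: z i) (\sum_(i < n) t i *: z i) <= r /\
  (ip (\sum_(i < n) t i *: z i) (\sum_(i < n) t i *: z i) = r ->
     exists i, z i = \sum_(i < n) t i *: z i).
Proof.
move=> t0 t1 zr.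
set y := \sum_(i < n) t i *: z i.
case: Hip => sym _ pos def.
have E i : t i * ip (z i - y) (z i - y) = r * t i - 2 * ip (t i *: z i) y + ip y y * t i.
  rewrite ipBl (sym (z i)) (sym y) !ipBl zr ipZl (sym y (z i)). ring.
have key : \sum_(i < n) t i * ip (z i - y) (z i - y) = r - ip y y.
  rewrite (eq_bigr _ (fun i _ => E i)) big_split /= sumrB -!mulr_sumr t1.

  rewrite -ip_suml -/y. ring.
have ge0 : 0 <= \sum_(i < n) t i * ip (z i - y) (z i - y).
  by apply: sumr_ge0 => i _; apply: mulr_ge0.
split; first lra.
move=> eqr.
have key0 : \sum_(i < n) t i * ip (z i - y) (z i - y) = 0 by rewrite key eqr subrr.
have := psumr_eq0P (fun i _ => mulr_ge0 (t0 i) (pos (z i - y))) key0 => H0.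
case: (pickP (fun i => 0 < t i)) => [i ti|none].
  exists i. have := H0 i isT. move/eqP; rewrite mulf_eq0 => /orP[/eqP ti0|/eqP h].
    by move: ti; rewrite ti0 ltxx.
  by apply/eqP; rewrite -subr_eq0; apply/eqP/def.
exfalso. have : \sum_(i < n) t i = 0.
  apply: big1 => i _. have := none i. have := t0 i. rewrite le_eqVlt => /orP[/eqP<-//|->//].
rewrite t1 => /eqP; by rewrite oner_eq0.
Qed.
End Aux.

Lemma id_maj (R : realType) (V W : lmodType R) (lam : V -> W) x y :
  lam y = lam x -> majorized lam y x.
Proof.
move=> e; exists 1%N, (fun _ => 1), (fun _ => y); split => //.
- by rewrite big_ord1.
- by rewrite big_ord1 scale1r.
Qed.

Theorem proposition9p4 (R : realType) (V W : lmodType R)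
  (ipV : V -> V -> R) (ipW : W -> W -> R) (lam : V -> W) :
  FTvN_system ipV ipW lam ->
  (forall A : V -> V, is_linear A ->
     (Aut lam A <->
      exists B : V -> V, [/\ cancel A B, cancel B A,
                             doubly_stochastic lam A & doubly_stochastic lam B]))
  /\
  (finite_dim V -> forall D : V -> V, in_conv_Aut lam D -> doubly_stochastic lam D).
Proof.
case=> HV HW Hnorm _ _.
have pos : forall z, 0 <= ipV z z by case: HV.
have Hcl x z : lam z = lam x -> ipV z z = ipV x x.
  move=> e; have := Hnorm z; rewrite e Hnorm /ipnorm => h.
  by rewrite -(sqr_sqrtr (pos z)) -h sqr_sqrtr.
have Hmaj x y : majorized lam y x ->
    ipV y y <= ipV x x /\ (ipV y y = ipV x x -> lam y = lam x).
  case=> n [t [p [t0 t1 hp ->]]].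
  have [h1 h2] := conv_sphere HV t0 t1 (fun i => Hcl x (p i) (hp i)).
  split => // e; case: (h2 e) => i <-; exact: hp i.
split.
  move=> A linA; split.
    case=> _ [B AB BA] HA; exists B; split => //.
      by split => // x; apply: id_maj.
    split.
      by move=> a x y; rewrite -{1}[x]BA -{1}[y]BA -linA AB.
    by move=> x; apply: id_maj; rewrite -{2}[x]BA HA.
  case=> B [AB BA [_ dA] [_ dB]]; split => //.
    by exists B.
  move=> x.
  have [h1 _] := Hmaj _ _ (dB (A x)); rewrite AB in h1.
  have [h3 h4] := Hmaj _ _ (dA x).
  by apply: h4; apply/eqP; rewrite eq_le h3 h1.
move=> _ D [n [t [A [t0 t1 HA HD]]]]; split.
  move=> a x y; rewrite !HD.
  rewrite (eq_bigr (fun i => a *: (t i *: A i x) + t i *: A i y)); last first.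
    by move=> i _; case: (HA i) => l _ _; rewrite l scalerDr !scalerA mulrC.
  by rewrite big_split /= -scaler_sumr.
move=> x; exists n, t, (fun i => A i x); split => // i.
by case: (HA i) => _ _ h; rewrite /lam_class h.
Qed.
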